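(* Let $n\ge 4$ and let $G$ be the complete sun graph on $2n$ vertices. Then for every integer $r\ge 3$, the $r$-th power of $G$ satisfies $\varphi(G^r)=(n-1)(2n-1)$.
   Context: All graphs are finite, simple and without isolated vertices. $\mathbb{N}_0$ denotes the set of non-negative integers; for finite $A,B\subseteq\mathbb{N}_0$, $A+B=\{a+b: a\in A, b\in B\}$. An integer additive set-indexer (IASI) of a graph $G$ is an injective map $f$ from $V(G)$ to the finite non-empty subsets of $\mathbb{N}_0$ such that the induced edge map $f^+(uv)=f(u)+f(v)$ is injective on $E(G)$. A weak IASI (WIASI) is an IASI $f$ with $|f^+(uv)|=\max(|f(u)|,|f(v)|)$ for every edge $uv$ (equivalently, for every edge at least one end vertex has a singleton label). A vertex or edge is mono-indexed if its set-label has cardinality $1$. Every graph admits a WIASI. The sparing number $\varphi(G)$ is the minimum, over all WIASIs of $G$, of the number of mono-indexed edges of $G$. The $r$-th power $G^r$ has vertex set $V(G)$, two distinct vertices being adjacent iff their distance in $G$ is at most $r$. The complete sun graph on $2n$ vertices ($n\ge 3$) has vertex set $U\cup W$ with $U=\{u_1,\dots,u_n\}$, $W=\{w_1,\dots,w_n\}$, where $U$ induces a complete graph, $W$ is an independent set, and $w_j$ is adjacent to $u_i$ if and only if $j=i$ or $j\equiv i+1 \pmod n$. *)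

(* Defs.v *)
From mathcomp Require Import all_boot.
Set Implicit Arguments. Unset Strict Implicit. Unset Printing Implicit Defensive.

Definition simple_graph (T : finType) (e : rel T) : Prop :=
  irreflexive e /\ symmetric e.

(* Finite subsets of N_0 are represented by duplicate-free lists of their
   elements; set equality is =i, cardinality is size. *)
Definition sumset (A B : seq nat) : seq nat :=
  undup [seq a + b | a <- A, b <- B].

Definition card_ns (A : seq nat) : nat := size (undup A).

Definition is_IASI (T : finType) (e : rel T) (f : T -> seq nat) : Prop :=
  (forall x, uniq (f x) /\ f x != [::]) /\
  (forall x y, f x =i f y -> x = y) /\
  (forall u v u' v', e u v -> e u' v' ->
     sumset (f u) (f v) =i sumset (f u') (f v') ->
     (u = u' /\ v = v') \/ (u = v' /\ v = u')).

Definition is_WIASI (T : finType) (e : rel T) (f : T -> seq nat) : Prop :=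
  is_IASI e f /\
  (forall u v, e u v ->
     card_ns (sumset (f u) (f v)) = maxn (card_ns (f u)) (card_ns (f v))).

Definition edges (T : finType) (e : rel T) : {set {set T}} :=
  [set [set x; y] | x in T, y in T & e x y].

Definition mono_edges (T : finType) (e : rel T) (f : T -> seq nat) : nat :=
  #|[set [set x; y] | x in T, y in T &
       e x y && (card_ns (sumset (f x) (f y)) == 1)]|.

Definition is_sparing_number (T : finType) (e : rel T) (k : nat) : Prop :=
  (exists f, is_WIASI e f /\ mono_edges e f = k) /\
  (forall f, is_WIASI e f -> k <= mono_edges e f).

Fixpoint walk_le (T : finType) (e : rel T) (k : nat) (x y : T) : bool :=
  match k with
  | 0 => x == y
  | k'.+1 => walk_le e k' x y || [exists z, walk_le e k' x z && e z y]
  end.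

Definition graph_pow (T : finType) (e : rel T) (r : nat) : rel T :=
  fun x y => (x != y) && walk_le e r x y.

(* Complete sun graph on 2n vertices: inl i = u_i, inr j = w_j
   (indices 0..n-1). *)
Definition sun_adj (n : nat) (x y : 'I_n + 'I_n) : bool :=
  match x, y with
  | inl i, inl j => i != j
  | inl i, inr j => (val j == val i) || (val j == (val i).+1 %% n)
  | inr j, inl i => (val j == val i) || (val j == (val i).+1 %% n)
  | inr _, inr _ => false
  end.

(* Main.v *)
Require Import Defs.
From mathcomp Require Import all_boot zify.
Set Implicit Arguments. Unset Strict Implicit. Unset Printing Implicit Defensive.

Lemma walk_refl (T : finType) (e : rel T) k x : walk_le e k x x.
Proof. by elim: k => [|k IH] /=; rewrite ?eqxx ?IH. Qed.

Lemma walk_step (T : finType) (e : rel T) k x z y :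
  walk_le e k x z -> e z y -> walk_le e k.+1 x y.
Proof. move=> H1 H2 /=; apply/orP; right; apply/existsP; exists z; by rewrite H1 H2. Qed.

Lemma walk_mono (T : finType) (e : rel T) k k' x y :
  k <= k' -> walk_le e k x y -> walk_le e k' x y.
Proof.
move=> /subnKC <-; elim: (k' - k) => [|d IH]; first by rewrite addn0.
by move=> H; rewrite addnS /= IH.
Qed.

Lemma sun_walk3 n (x y : 'I_n + 'I_n) : x != y -> walk_le (@sun_adj n) 3 x y.
Proof.
have W1 : forall k a b, sun_adj a b -> walk_le (@sun_adj n) k.+1 a b.
  move=> k a b H; apply: (walk_mono (k:=1)) => //; exact: walk_step (walk_refl _ _ _) H.
case: x => [i|j]; case: y => [i'|j'] => Hne.
- apply: W1 => /=; apply: contraNneq Hne => ->; done.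
- case E: (val j' == val i); first by apply: W1 => /=; rewrite E.
  apply: (walk_mono (k:=2)) => //; apply: (walk_step (z := inl j')).
    apply: W1 => /=; apply/negP => /eqP Hij; by rewrite Hij eqxx in E.
  by rewrite /= eqxx.
- case E: (val j == val i'); first by apply: W1 => /=; rewrite E.
  apply: (walk_mono (k:=2)) => //; apply: (walk_step (z := inl j)).
    by apply: W1 => /=; rewrite eqxx.
  rewrite /=; apply/negP => /eqP Hij; by rewrite Hij eqxx in E.
- apply: (walk_step (z := inl j')); last by rewrite /= eqxx.
  apply: (walk_step (z := inl j)); last first.
    rewrite /=; apply: contraNneq Hne => ->; done.
  apply: walk_step (walk_refl _ _ _) _; by rewrite /= eqxx.
Qed.

Lemma pow_complete n r (x y : 'I_n + 'I_n) : 3 <= r ->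
  graph_pow (@sun_adj n) r x y = (x != y).
Proof.
move=> hr; rewrite /graph_pow; case H: (x != y) => //=.
exact: walk_mono hr (sun_walk3 H).
Qed.


Lemma max_exists (A : seq nat) : A != [::] ->
  exists2 m, m \in A & forall a, a \in A -> a <= m.
Proof.
elim: A => [//|x A IH] _.
case: (altP (A =P [::])) => [->|/IH [m mA Hm]].
  by exists x; rewrite ?inE // => a; rewrite inE => /eqP ->.
exists (maxn x m); first by rewrite /maxn; case: ltnP; rewrite inE ?eqxx ?mA ?orbT.
move=> a; rewrite inE => /orP [/eqP ->|/Hm]; first exact: leq_maxl.
move=> H; exact: leq_trans H (leq_maxr _ _).
Qed.

Lemma card_sumset_lb A B : A != [::] -> 2 <= card_ns B ->
  card_ns A < card_ns (sumset A B).
Proof.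
move=> An0 HB; rewrite /card_ns /sumset (undup_id (undup_uniq _)).
move: HB; rewrite /card_ns => HB.
have [b1 [b2 [b1B b2B lt12]]] : exists b1 b2, [/\ b1 \in B, b2 \in B & b1 < b2].
  have : uniq (undup B) by exact: undup_uniq.
  have sub : {subset undup B <= B} by move=> z; rewrite mem_undup.
  move: HB; case: (undup B) sub => [|x [|y t]] //= sub _ /andP [xn _].
  have xB : x \in B by apply: sub; rewrite inE eqxx.
  have yB : y \in B by apply: sub; rewrite !inE eqxx orbT.
  have xy : x != y by apply: contraNneq xn => ->; rewrite inE eqxx.
  have [h|h|h] := ltngtP x y; [by exists x, y| by exists y, x| by rewrite h eqxx in xy].
have [m mA Hm] := max_exists An0.
set s1 := (m + b2) :: map (fun a => a + b1) (undup A).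
have -> : (size (undup A)).+1 = size s1 by rewrite /= size_map.
apply: uniq_leq_size.
  rewrite /= (map_inj_uniq (can_inj (addnK b1))) undup_uniq andbT.
  apply/mapP => [[a aA]]; rewrite mem_undup in aA; have := Hm _ aA; lia.
move=> z; rewrite inE => /orP [/eqP ->|/mapP [a aA ->]]; rewrite mem_undup.
  exact: allpairs_f.
rewrite mem_undup in aA; exact: allpairs_f.
Qed.


Lemma card_pos (A : seq nat) : A != [::] -> 0 < card_ns A.
Proof.
case: A => [//|a A] _; rewrite /card_ns lt0n size_eq0.
apply/eqP => H; have : a \in undup (a :: A) by rewrite mem_undup inE eqxx.
by rewrite H.
Qed.

Lemma sumset_comm A B : card_ns (sumset A B) = card_ns (sumset B A).
Proof.
rewrite /card_ns; apply: perm_size; apply: uniq_perm; rewrite ?undup_uniq //.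
move=> z; rewrite /sumset !mem_undup.
apply/allpairsP/allpairsP => [[[a b] /= [aA bB ->]]|[[a b] /= [aA bB ->]]];
  exists (b, a); by rewrite /= addnC.
Qed.

Definition Sset (T : finType) (f : T -> seq nat) : {set T} :=
  [set v | card_ns (f v) == 1].

Lemma wiasi_one (T : finType) (e : rel T) f :
  (forall x y, e x y = (x != y)) -> is_WIASI e f ->
  forall x y, x != y -> (card_ns (f x) == 1) || (card_ns (f y) == 1).
Proof.
move=> He [[Hne _] Hc] x y xy.
have := Hc x y; rewrite He xy => /(_ isT) Hm.
have px := card_pos (Hne x).2; have py := card_pos (Hne y).2.
apply/negPn/negP; rewrite negb_or => /andP [h1 h2].
have l1 : card_ns (f x) < card_ns (sumset (f x) (f y)).
  apply: card_sumset_lb; [exact: (Hne x).2| lia].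
have l2 : card_ns (f y) < card_ns (sumset (f x) (f y)).
  rewrite sumset_comm; apply: card_sumset_lb; [exact: (Hne y).2| lia].
lia.
Qed.

Lemma S_big (T : finType) (e : rel T) f :
  (forall x y, e x y = (x != y)) -> is_WIASI e f -> #|T|.-1 <= #|Sset f|.
Proof.
move=> He W; rewrite -(cardsC (Sset f)).
suff : #|~: Sset f| <= 1 by lia.
rewrite leqNgt; apply/negP => /card_gt1P [x [y [xS yS xy]]].
have := wiasi_one He W xy; rewrite !inE in xS yS.
by rewrite (negbTE xS) (negbTE yS).
Qed.

Lemma mono_eq (T : finType) (e : rel T) f :
  (forall x y, e x y = (x != y)) -> is_WIASI e f ->
  mono_edges e f = 'C(#|Sset f|, 2).
Proof.
move=> He [[Hne _] Hc]; rewrite /mono_edges -cards_draws; apply: eq_card => B; rewrite !inE; apply/imset2P/andP.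
  case=> x y _; rewrite inE He => /andP [_ /andP [xy Hm]] ->.
  have := Hc x y; rewrite He xy => /(_ isT); rewrite (eqP Hm) => Hmax.
  have px := card_pos (Hne x).2; have py := card_pos (Hne y).2.
  split; last by rewrite cards2 xy.
  rewrite subUset !sub1set !inE; apply/andP; split; apply/eqP; lia.
move=> [sB /cards2P [x [y [xy BE]]]].
have : x \in Sset f by apply: (subsetP sB); rewrite BE !inE eqxx.
have : y \in Sset f by apply: (subsetP sB); rewrite BE !inE eqxx orbT.
rewrite !inE => /eqP hy /eqP hx.
exists x y => //; rewrite inE He xy /=.
have := Hc x y; rewrite He xy => /(_ isT) ->; by rewrite hx hy.
Qed.


Lemma logn2_sum a b : a < b -> logn 2 (2 ^ a + 2 ^ b) = a.
Proof.
move=> ab; have -> : 2 ^ a + 2 ^ b = 2 ^ a * (1 + 2 ^ (b - a)).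
  by rewrite mulnDr muln1 -expnD subnKC // ltnW.
rewrite lognM ?expn_gt0 // pfactorK // lognE /= dvdn2 oddD oddX /=.
have -> : (b - a == 0) = false by lia.
by rewrite addn0.
Qed.

Lemma decode a b c d : a != b -> c != d -> 2 ^ a + 2 ^ b = 2 ^ c + 2 ^ d ->
  (a = c /\ b = d) \/ (a = d /\ b = c).
Proof.
have key : forall a b c d, a < b -> c < d -> 2 ^ a + 2 ^ b = 2 ^ c + 2 ^ d ->
    a = c /\ b = d.
  move=> a' b' c' d' h1 h2 E.
  have ac : a' = c' by rewrite -(logn2_sum h1) -(logn2_sum h2) E.
  split=> //; subst; apply: (expnI (isT : 1 < 2)); lia.
move=> ab cd E.
case: (ltngtP a b) ab => // h1 _; case: (ltngtP c d) cd => // h2 _.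
- by left; apply: key.
- right; have [] := key _ _ _ _ h1 h2 (etrans E (addnC _ _)); by [].
- right; have [] := key _ _ _ _ h1 h2 (etrans (addnC _ _) E); by [].
- left; have [] := key _ _ _ _ h1 h2; last by [].
  by rewrite addnC E addnC.
Qed.



Definition gg (T : finType) (v : T) : nat := 2 ^ (enum_rank v : nat).+1.
Definition ff (T : finType) (v0 : T) (v : T) : seq nat := if v == v0 then [:: 0; 1] else [:: gg v].

Lemma ggE (T : finType) (v : T) : gg v = 2 * 2 ^ (enum_rank v : nat).
Proof. by rewrite /gg expnS. Qed.

Lemma gg_inj (T : finType) (x y : T) : gg x = gg y -> x = y.
Proof.
move=> /(expnI (isT : 1 < 2)) [] /val_inj; exact: enum_rank_inj.
Qed.

Lemma memS (T : finType) (v0 u v : T) z : u != v ->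
  (z \in sumset (ff v0 u) (ff v0 v)) =
  (if u == v0 then (z == gg v) || (z == gg v + 1)
   else if v == v0 then (z == gg u) || (z == gg u + 1) else z == gg u + gg v).
Proof.
move=> uv; rewrite /sumset mem_undup /ff.
case: (eqVneq u v0) uv => [->|hu] uv.
  by rewrite eq_sym (negbTE uv) /= !inE add0n add1n addn1.
case: (eqVneq v v0) => [_|hv] /=; by rewrite !inE ?addn0 ?orbF.
Qed.

Lemma cardS (T : finType) (v0 u v : T) : u != v ->
  card_ns (sumset (ff v0 u) (ff v0 v)) = maxn (card_ns (ff v0 u)) (card_ns (ff v0 v)).
Proof.
move=> uv; rewrite /card_ns /sumset undup_id ?undup_uniq // /ff.
have ne : forall k, (k == k + 1) = false by move=> k; lia.
have ne' : forall k, (k + 1 == k) = false by move=> k; lia.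
case: (eqVneq u v0) uv => [->|hu] uv.
  by rewrite eq_sym (negbTE uv) /= !inE add0n add1n -addn1 ne.
case: (eqVneq v v0) => [_|hv] /=; last by [].
by rewrite addn0 inE ne.
Qed.

Lemma ff_wiasi (T : finType) (e : rel T) (v0 : T) (He : forall x y, e x y = (x != y)) : is_WIASI e (ff v0).
Proof.
split; last by move=> u v; rewrite He; exact: cardS.
split; [|split].
- by move=> x; rewrite /ff; case: (x == v0).
- move=> x y H; rewrite /ff in H.
  case: (eqVneq x v0) H => [->|hx]; case: (eqVneq y v0) => [->|hy] //= H.
  + by have := H 0; rewrite !inE /= ggE; lia.
  + by have := H 0; rewrite !inE /= ggE; lia.
  + by have := H (gg x); rewrite !inE eqxx => /esym /eqP /gg_inj.
- move=> u v u' v'; rewrite !He => uv uv' H.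
  have {}H : forall z, _ := fun z => etrans (esym (memS v0 z uv)) (etrans (H z) (memS v0 z uv')).
  case: (eqVneq u v0) H uv => [->|hu] H uv; case: (eqVneq v v0) H uv => [->|hv] H uv //;
  case: (eqVneq u' v0) H uv' => [->|hu'] H uv'; case: (eqVneq v' v0) H uv' => [->|hv'] H uv' //.
  + have := H (gg v); rewrite eqxx /= => /esym /orP [/eqP /gg_inj ->|/eqP]; first by left.
    rewrite !ggE; lia.
  + have := H (gg v); rewrite eqxx /= => /esym /orP [/eqP /gg_inj ->|/eqP]; first by right.
    rewrite !ggE; lia.
  + have := H (gg v + 1); rewrite eqxx orbT => /esym /eqP; rewrite !ggE; lia.
  + have := H (gg u); rewrite eqxx /= => /esym /orP [/eqP /gg_inj ->|/eqP]; first by right.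
    rewrite !ggE; lia.
  + have := H (gg u); rewrite eqxx /= => /esym /orP [/eqP /gg_inj ->|/eqP]; first by left.
    rewrite !ggE; lia.
  + have := H (gg u + 1); rewrite eqxx orbT => /esym /eqP; rewrite !ggE; lia.
  + have := H (gg v' + 1); rewrite eqxx orbT => /eqP; rewrite !ggE; lia.
  + have := H (gg u' + 1); rewrite eqxx orbT => /eqP; rewrite !ggE; lia.
  + have := H (gg u + gg v); rewrite eqxx => /esym /eqP; rewrite /gg.
    have nuv : (enum_rank u : nat).+1 != (enum_rank v : nat).+1.
      by rewrite eqSS; apply: contraNneq uv => /val_inj /enum_rank_inj ->.
    have nuv' : (enum_rank u' : nat).+1 != (enum_rank v' : nat).+1.
      by rewrite eqSS; apply: contraNneq uv' => /val_inj /enum_rank_inj ->.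
    move=> E; have [[E1 E2]|[E1 E2]] := decode nuv nuv' E.
    * by left; move: E1 E2 => [/val_inj/enum_rank_inj ->] [/val_inj/enum_rank_inj ->].
    * by right; move: E1 E2 => [/val_inj/enum_rank_inj ->] [/val_inj/enum_rank_inj ->].
Qed.

Lemma ff_S (T : finType) (v0 : T) : #|Sset (ff v0)| = #|T|.-1.
Proof.
rewrite -(cardsC1 v0); apply: eq_card => v; rewrite !inE /ff.
by case: (v == v0).
Qed.



Lemma binC n : 0 < n -> 'C((n + n).-1, 2) = (n - 1) * (2 * n - 1).
Proof.
move=> hn; rewrite bin2.
have -> : (n + n).-1 * (n + n).-1.-1 = ((n - 1) * (2 * n - 1)).*2.
  case: n hn => [//|m] _; rewrite -muln2; nia.
by rewrite doubleK.
Qed.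

Theorem mainTheorem6 (n : nat) (hn : 4 <= n) (r : nat) (hr : 3 <= r) :
  is_sparing_number (graph_pow (@sun_adj n) r) ((n - 1) * (2 * n - 1)).
Proof.
have He := fun x y => @pow_complete n r x y hr.
have hT : #|{: 'I_n + 'I_n}| = n + n by rewrite card_sum card_ord.
have n0 : 0 < n by apply: leq_trans hn.
split.
  exists (ff (inl (Ordinal n0) : 'I_n + 'I_n)); split; first exact: ff_wiasi.
  by rewrite (mono_eq He (ff_wiasi _ He)) ff_S hT binC.
move=> f W; rewrite (mono_eq He W) -binC // -hT.
apply: leq_bin2l; exact: S_big He W.
Qed.
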